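(* Let $m\ge 2$ be fixed and assume (A1)–(A4). Let $X_{\mathbf 1}$ be the number of coupons collected by all $m$ collectors. Then $$\operatorname{Var}(X_{\mathbf 1})\asymp \frac{(n-a_1)(n-a_2)}{n}\prod_{i=1}^m\frac{a_i}{n}=\Big(1-\frac{a_1}{n}\Big)\Big(1-\frac{a_2}{n}\Big)\mathbb{E}(X_{\mathbf 1}).$$
   Context: Coupon collector model: there are $n$ distinct coupons and $m$ collectors acting independently; collector $i$ collects a uniformly random subset of exactly $a_i$ distinct coupons, independently of the others. We consider a sequence of such models indexed by $n$, with $m$ fixed and $a_i=a_i(n)$, under the asymptotic assumptions: (A1) $n\to\infty$; (A2) $a_i\to\infty$ and $n-a_i\to\infty$ for each $i=1,\dots,m$; (A3) $1\le a_1\le a_2\le\cdots\le a_m\le n-1$; (A4) $a_i/n\to\alpha_i\in[0,1]$ for each $i$. For positive sequences, $x_n\asymp y_n$ means that both $\limsup x_n/y_n$ and $\liminf x_n/y_n$ are finite and strictly positive. *)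

(* Defs.v *)
From mathcomp Require Import all_boot.
From Stdlib Require Import Reals.

Set Implicit Arguments.
Unset Strict Implicit.
Unset Printing Implicit Defensive.

(* A configuration of the model with n coupons and m collectors, where
   collector i collects exactly [a i] coupons: a family of m subsets of
   'I_n with #|f i| = a i.  The joint law of the collectors (independent,
   each uniform on the a_i-subsets) is the uniform law on such configurations. *)
Definition config_ok (n m : nat) (a : nat -> nat) (f : {ffun 'I_m -> {set 'I_n}}) : bool :=
  [forall i : 'I_m, #|f i| == a i].

Definition X_all (n m : nat) (f : {ffun 'I_m -> {set 'I_n}}) : nat :=
  #|\bigcap_(i : 'I_m) f i|.

Definition n_configs (n m : nat) (a : nat -> nat) : nat :=
  \sum_(f : {ffun 'I_m -> {set 'I_n}} | config_ok a f) 1.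

Definition sum_X (n m : nat) (a : nat -> nat) : nat :=
  \sum_(f : {ffun 'I_m -> {set 'I_n}} | config_ok a f) X_all f.

Definition sum_X2 (n m : nat) (a : nat -> nat) : nat :=
  \sum_(f : {ffun 'I_m -> {set 'I_n}} | config_ok a f) (X_all f) ^ 2.

Definition mean_X (n m : nat) (a : nat -> nat) : R :=
  (INR (sum_X n m a) / INR (n_configs n m a))%R.

Definition var_X (n m : nat) (a : nat -> nat) : R :=
  (INR (sum_X2 n m a) / INR (n_configs n m a) - (mean_X n m a) ^ 2)%R.

Definition tends_to_infty (s : nat -> nat) : Prop :=
  forall M : nat, exists K : nat, forall k : nat, (K <= k)%N -> (M <= s k)%N.

(* x_k ≍ y_k : the ratio x_k / y_k has finite, strictly positive limsup and
   liminf, i.e. it is eventually bounded between two positive constants. *)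
Definition asymp (x y : nat -> R) : Prop :=
  exists c C : R, (0 < c)%R /\ (0 < C)%R /\
    exists K : nat, forall k : nat, (K <= k)%N ->
      (c <= x k / y k)%R /\ (x k / y k <= C)%R.

(* Main.v *)
Require Import Defs.
From HB Require Import structures.
From mathcomp Require Import all_boot.
From Stdlib Require Import Reals Lra Psatz.
Set Implicit Arguments. Unset Strict Implicit. Unset Printing Implicit Defensive.
Lemma prod_bool (I : finType) (P : pred I) :
  \prod_(i : I) (if P i then 1 else 0) = if [forall i, P i] then 1 else 0.
Proof.
case: (boolP [forall i, P i]) => [/forallP h|/forallPn [i /negbTE hi]].
  by apply: big1 => i _; rewrite h.
by rewrite (bigD1 i) //= hi mul0n.
Qed.

Lemma count_prod n m (P : 'I_m -> pred {set 'I_n}) :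
  \sum_(f : {ffun 'I_m -> {set 'I_n}} | [forall i, P i (f i)]) 1
  = \prod_(i < m) #|[set A | P i A]|.
Proof.
transitivity (\prod_(i < m) \sum_(A : {set 'I_n}) (if P i A then 1 else 0)); last first.
  apply: eq_bigr => i _; rewrite -sum1_card [RHS]big_mkcond /=.
  by apply: eq_bigr => A _; rewrite inE.
rewrite (bigA_distr_bigA (fun i A => if P i A then 1 else 0)) /= big_mkcond /=.
by apply: eq_bigr => f _; rewrite prod_bool.
Qed.

Lemma card_sup (T : finType) (S : {set T}) k :
  #|[set A : {set T} | (#|A| == k + #|S|) && (S \subset A)]| = 'C(#|T| - #|S|, k).
Proof.
have cS : #|~: S| = #|T| - #|S| by rewrite -(cardsC S) addKn.
rewrite -cS -cards_draws.
set D := [set B : {set T} | B \subset ~: S & #|B| == k].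
have inj : {in D &, injective (fun B => B :|: S)}.
  move=> B1 B2; rewrite !inE => /andP [h1 _] /andP [h2 _] e.
  apply/setP => x; move/setP: e => /(_ x).
  rewrite !inE; case xS: (x \in S).
    have n1 : x \in B1 = false by apply/negP => /(subsetP h1); rewrite inE xS.
    have n2 : x \in B2 = false by apply/negP => /(subsetP h2); rewrite inE xS.
    by rewrite n1 n2.
  by rewrite !orbF.
rewrite -(card_in_imset inj); apply: eq_card => A.
rewrite inE; apply/andP/imsetP.
  move=> [/eqP cA SA]; exists (A :\: S); last first.
    apply/setP => x; rewrite !inE; case xS: (x \in S); rewrite /= ?orbT ?orbF //.
    exact: (subsetP SA).
  rewrite inE; apply/andP; split.
    by apply/subsetP => x; rewrite !inE => /andP [].
  by rewrite cardsD (setIidPr SA) cA addnK.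
move=> [B]; rewrite inE => /andP [BS /eqP cB] ->; split.
  rewrite cardsU cB.
  have -> : B :&: S = set0.
    apply/setP => x; rewrite !inE; apply/negbTE; apply/negP => /andP [xB xS].
    by have := subsetP BS x xB; rewrite inE xS.
  by rewrite cards0 subn0.
exact: subsetUr.
Qed.

Lemma c0E n a : #|[set A : {set 'I_n} | #|A| == a]| = 'C(n, a).
Proof. by rewrite card_draws card_ord. Qed.

Lemma c1E n a (j : 'I_n) : 0 < a ->
  #|[set A : {set 'I_n} | (#|A| == a) && (j \in A)]| = 'C(n.-1, a.-1).
Proof.
move=> a0; have := card_sup [set j] a.-1.
rewrite cards1 card_ord addn1 prednK // subn1 => <-.
by apply: eq_card => A; rewrite !inE sub1set.
Qed.

Definition c2v n a := if 1 < a then 'C(n.-2, a.-2) else 0.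

Lemma c2E n a (j l : 'I_n) : j != l ->
  #|[set A : {set 'I_n} | [&& #|A| == a, j \in A & l \in A]]| = c2v n a.
Proof.
move=> jl; rewrite /c2v; case: ifP => a1.
  have := card_sup [set j; l] a.-2.
  have e : a.-2.+2 = a by case: a a1 => [|[|a]].
  rewrite cards2 jl card_ord addn2 e subn2 => <-.
  by apply: eq_card => A; rewrite !inE subUset !sub1set.
apply: eq_card0 => A; rewrite inE; apply/negP => /and3P [/eqP cA jA lA].
have : #|[set j; l]| <= #|A|.
  by apply: subset_leq_card; rewrite subUset !sub1set jA lA.
by rewrite cards2 jl cA a1.
Qed.

Lemma nconfE n m (a : nat -> nat) : n_configs n m a = \prod_(i < m) 'C(n, a i).
Proof.
rewrite /n_configs /config_ok (count_prod (fun i A => #|A| == a i)).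
by apply: eq_bigr => i _; rewrite c0E.
Qed.

Lemma sumXE n m (a : nat -> nat) : (forall i : 'I_m, 0 < a i) ->
  sum_X n m a = n * \prod_(i < m) 'C(n.-1, (a i).-1).
Proof.
move=> ha; rewrite /sum_X /X_all.
transitivity (\sum_(f : {ffun 'I_m -> {set 'I_n}} | config_ok a f)
   \sum_(j : 'I_n) (if j \in \bigcap_i f i then 1 else 0)).
  by apply: eq_bigr => f _; rewrite -sum1_card big_mkcond.
rewrite exchange_big /=.
transitivity (\sum_(j : 'I_n) \prod_(i < m) 'C(n.-1, (a i).-1));
  last by rewrite sum_nat_const card_ord.
apply: eq_bigr => j _; rewrite -big_mkcondr.
rewrite (eq_bigl (fun f : {ffun 'I_m -> {set 'I_n}} =>
            [forall i, (#|f i| == a i) && (j \in f i)])); last first.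
  move=> f; rewrite /config_ok; apply/andP/forallP => [[/forallP h1 /bigcapP h2] i | h].
    by rewrite h1 h2.
  split; first by apply/forallP => i; case/andP: (h i).
  by apply/bigcapP => i _; case/andP: (h i).
rewrite (count_prod (fun i A => (#|A| == a i) && (j \in A))).
by apply: eq_bigr => i _; rewrite c1E.
Qed.

Lemma sq_card (T : finType) (B : {set T}) :
  Nat.pow #|B| 2 = \sum_(j : T) \sum_(l : T) (if (j \in B) && (l \in B) then 1 else 0).
Proof.
have e : #|B| = \sum_(j in B) 1 by rewrite sum1_card.
have -> : Nat.pow #|B| 2 = #|B| * #|B| by rewrite /= PeanoNat.Nat.mul_1_r.
rewrite {1}e big_distrl /=.
rewrite big_mkcond; apply: eq_bigr => j _.
case: (j \in B) => /=; last by rewrite big1.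
by rewrite mul1n e big_mkcond.
Qed.

Lemma sumX2E n m (a : nat -> nat) : (forall i : 'I_m, 0 < a i) ->
  sum_X2 n m a = n * (\prod_(i < m) 'C(n.-1, (a i).-1)
                      + n.-1 * \prod_(i < m) c2v n (a i)).
Proof.
move=> ha; rewrite /sum_X2 /X_all.
under eq_bigr => f _ do rewrite sq_card.
rewrite exchange_big /=.
transitivity (\sum_(j : 'I_n) (\prod_(i < m) 'C(n.-1, (a i).-1)
                      + n.-1 * \prod_(i < m) c2v n (a i)));
  last by rewrite sum_nat_const card_ord.
apply: eq_bigr => j _; rewrite exchange_big /=.
transitivity (\sum_(l : 'I_n)
   \prod_(i < m) #|[set A : {set 'I_n} | [&& #|A| == a i, j \in A & l \in A]]|).
  apply: eq_bigr => l _; rewrite -big_mkcondr.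
  rewrite -(count_prod (fun i A => [&& #|A| == a i, j \in A & l \in A])).
  apply: eq_bigl => f; rewrite /config_ok.
  apply/andP/forallP => [[/forallP h1 /andP [/bigcapP h2 /bigcapP h3]] i | h].
    by rewrite h1 h2 ?h3.
  split; first by apply/forallP => i; case/and3P: (h i).
  by apply/andP; split; apply/bigcapP => i _; case/and3P: (h i).
rewrite (bigD1 j) //=; congr (_ + _).
  apply: eq_bigr => i _; rewrite -(c1E j (ha i)).
  by apply: eq_card => A; rewrite !inE andbb.
transitivity (\sum_(l | l != j) \prod_(i < m) c2v n (a i)).
  apply: eq_bigr => l lj; apply: eq_bigr => i _; apply: c2E.
  by rewrite eq_sym.
by rewrite sum_nat_const cardC1 card_ord.
Qed.
HB.instance Definition _ := Monoid.isComLaw.Build R 1%R Rmult (fun x y z => esym (Rmult_assoc x y z)) Rmult_comm Rmult_1_l.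

Section Key.
Open Scope R_scope.
Variables (N : R) (x : nat -> R).
Definition rr i := x i / N.
Definition ss i := (x i - 1) / (N - 1).
Definition tt i := 1 - rr i.
Definition PP k := \big[Rmult/1]_(0 <= i < k) rr i.
Definition SS k := \big[Rmult/1]_(0 <= i < k) ss i.
Definition DD k := 1 - N * PP k + (N - 1) * SS k.

Hypothesis N2 : 2 <= N.
Variable m : nat.
Hypothesis xb : forall i : nat, (i < m)%nat -> 1 <= x i <= N - 1.
Hypothesis xs : forall i j : nat, (i <= j)%nat -> (j < m)%nat -> x i <= x j.

Lemma rr_b i : (i < m)%nat -> 0 < rr i < 1.
Proof. move=> /xb h; rewrite /rr /Rdiv.
have h1 : 0 < / N by apply: Rinv_0_lt_compat; lra.
have h2 : N * / N = 1 by field; lra.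
split; nra. Qed.

Lemma rs_diff i : rr i - ss i = tt i / (N - 1).
Proof. rewrite /tt /rr /ss; field; lra. Qed.

Lemma ss_b i : (i < m)%nat -> 0 <= ss i <= rr i.
Proof. move=> h; have := rr_b h; move/xb: h => h [h1 h2]; split.
  rewrite /ss /Rdiv; apply: Rmult_le_pos; [lra| apply: Rlt_le; apply: Rinv_0_lt_compat; lra].
  have := rs_diff i; rewrite /tt /Rdiv.
  have : 0 < / (N - 1) by apply: Rinv_0_lt_compat; lra.
  nra. Qed.

Lemma D_rec k : DD k.+1 = DD k + N * tt k * (PP k - SS k).
Proof.
rewrite /DD /PP /SS !big_nat_recr //= /tt /rr /ss.
set p := \big[Rmult/1]_(0 <= i < k) _.
set q := \big[Rmult/1]_(0 <= i < k) _.
field; lra. Qed.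

Lemma PS_b k : (k <= m)%nat -> 0 <= SS k <= PP k /\ PP k <= 1
   /\ PP k - SS k <= INR k * tt 0 / (N - 1).
Proof.
elim: k => [|k IH] km.
  rewrite /PP /SS !big_geq //= /Rdiv; lra.
have km' : (k < m)%nat by [].
have [] := IH (ltnW km') => [[S0 SP] [P1 Hd]].
have [r0 r1] := rr_b km'. have [s0 s1] := ss_b km'.
have td := rs_diff k.
have tk : tt k <= tt 0.
  rewrite /tt /rr; have := xs (leq0n k) km'; have := xb km'.
  move=> h1 h2; apply: Rplus_le_compat_l; apply: Ropp_le_contravar.
  apply: Rmult_le_compat_r; [apply: Rlt_le; apply: Rinv_0_lt_compat; lra|lra].
have tpos : 0 <= tt k / (N-1).
  apply: Rmult_le_pos; [rewrite /tt; lra| apply: Rlt_le; apply: Rinv_0_lt_compat; lra].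
have tk' : tt k / (N-1) <= tt 0 / (N-1).
  apply: Rmult_le_compat_r; [apply: Rlt_le; apply: Rinv_0_lt_compat; lra|lra].
rewrite /PP /SS !big_nat_recr // -/(PP k) -/(SS k) S_INR.
have P0 : 0 <= PP k by lra.
split; [split; [apply: Rmult_le_pos=>//|apply: Rmult_le_compat=>//]|split; [apply: (Rle_trans _ (1 * 1)); [apply: Rmult_le_compat; lra | lra]|]].
have : PP k * rr k - SS k * ss k = rr k * (PP k - SS k) + SS k * (rr k - ss k) by ring.
move=> ->. rewrite td.
have e : (INR k + 1) * tt 0 / (N - 1) = INR k * tt 0 / (N-1) + tt 0 / (N - 1).
  rewrite /Rdiv; ring.
rewrite e. nra.
Qed.

Hypothesis m2 : (2 <= m)%nat.

Lemma tt_b i : (i < m)%nat -> 0 < tt i /\ tt i <= tt 0 /\ ((0 < i)%nat -> tt i <= tt 1).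
Proof.
move=> im; have := rr_b im; rewrite /tt => -[h1 h2].
have hN : 0 < / N by apply: Rinv_0_lt_compat; lra.
split; first lra.
split.
  rewrite /rr /Rdiv; have := xs (leq0n i) im; nra.
move=> i0; rewrite /rr /Rdiv; have := xs i0 im; nra.
Qed.

Lemma D0 : DD 0 = 0.
Proof. rewrite /DD /PP /SS !big_geq //; ring. Qed.

Lemma D2 : DD 2 = N / (N - 1) * tt 0 * tt 1.
Proof.
rewrite D_rec D_rec D0 /PP /SS big_geq // big_nat1 big_geq // big_nat1.
have := rs_diff 0. rewrite /Rdiv => h.
have -> : rr 0 = ss 0 + tt 0 * / (N - 1) by lra.
ring. Qed.

Lemma D_b k : (k <= m)%nat -> 0 <= DD k /\ DD k <= 2 * INR k * INR m * tt 0 * tt 1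
   /\ ((2 <= k)%nat -> tt 0 * tt 1 <= DD k).
Proof.
have [t0p _] := tt_b (ltnW m2).
have [t1p _] := tt_b m2.
have hA : 1 <= N / (N - 1) <= 2.
  have h : 0 < / (N - 1) by apply: Rinv_0_lt_compat; lra.
  have h' : (N - 1) * / (N - 1) = 1 by field; lra.
  rewrite /Rdiv; split; nra.
elim: k => [|k IH] km.
  rewrite D0; split; [lra|split; [rewrite /= ; lra| by []]].
have km' : (k < m)%nat by [].
have [Dp [Du Dl]] := IH (ltnW km').
have [[S0 SP] [P1 Hd]] := PS_b (ltnW km').
have [tkp [tk0 tk1]] := tt_b km'.
have term0 : 0 <= N * tt k * (PP k - SS k).
  apply: Rmult_le_pos; [apply: Rmult_le_pos; lra | lra].
have hm : INR k + 1 <= INR m.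
  rewrite -S_INR; apply: le_INR; apply/leP; exact: km.
have hk0 : 0 <= INR k := pos_INR k.
have termU : N * tt k * (PP k - SS k) <= 2 * INR m * tt 0 * tt 1.
  case: (posnP k) => [k0 | kpos].
    rewrite k0 /PP /SS !big_geq //. have : 0 <= tt 0 * tt 1 by nra.
    have : 0 <= INR m := pos_INR m. nra.
  have {}tk1 := tk1 kpos.
  apply: (Rle_trans _ (N * tt k * (INR k * tt 0 / (N - 1)))).
    apply: Rmult_le_compat_l; [apply: Rmult_le_pos; lra | lra].
  have -> : N * tt k * (INR k * tt 0 / (N - 1)) = N / (N - 1) * (tt k * (INR k * tt 0)).
    rewrite /Rdiv; ring.
  have -> : 2 * INR m * tt 0 * tt 1 = 2 * (tt 1 * (INR m * tt 0)) by ring.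
  apply: Rmult_le_compat; try lra.
    apply: Rmult_le_pos; [lra| apply: Rmult_le_pos; lra].
  apply: Rmult_le_compat; try lra.
    apply: Rmult_le_pos; lra.
  apply: Rmult_le_compat_r; lra.
rewrite D_rec; split; first lra.
split.
  rewrite S_INR. nra.
move=> k2; case: (ltnP 1 k) => hk.
  have := Dl hk; lra.
have -> : k = 1%nat by apply/eqP; rewrite eqn_leq hk; exact: k2.
rewrite -D_rec D2.
have : 0 <= tt 0 * tt 1 by nra.
nra.
Qed.

End Key.

Section Final.
Open Scope R_scope.

Lemma INR_prod (I : finType) (F : I -> nat) :
  INR (\prod_(i : I) F i) = \big[Rmult/1]_(i : I) INR (F i).
Proof. exact: (big_morph INR (fun x y => mult_INR x y) (erefl (INR 1))). Qed.

Lemma prod_pos (m : nat) (F : 'I_m -> R) : (forall i, 0 < F i) ->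
  0 < \big[Rmult/1]_(i < m) F i.
Proof.
move=> h; apply: (big_ind (fun x => 0 < x)) => //; first lra.
by move=> u v hu hv; apply: Rmult_lt_0_compat.
Qed.

Variables (n m : nat) (a : nat -> nat).
Hypothesis m2 : (2 <= m)%nat.
Hypothesis ab : forall i : nat, (i < m)%nat -> (1 <= a i)%nat /\ (a i <= n - 1)%nat.
Hypothesis as_ : forall i j : nat, (i <= j)%nat -> (j < m)%nat -> (a i <= a j)%nat.

Let Nr := INR n.
Let x i := INR (a i).

Lemma n2 : (2 <= n)%nat.
Proof. have [h1 h2] := ab (ltnW m2). by case: n h2 h1 => [|[|n']] //=; case: (a 0). Qed.

Lemma Nr2 : 2 <= Nr.
Proof. rewrite /Nr; apply: (le_INR 2); apply/leP; exact: n2. Qed.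

Lemma xb : forall i : nat, (i < m)%nat -> 1 <= x i <= Nr - 1.
Proof.
move=> i im; have [h1 h2] := ab im; rewrite /x /Nr; split.
  by apply: (le_INR 1); apply/leP.
have n1 : (1 <= n)%nat by have := n2; case: n.
rewrite -(minus_INR n 1); last by apply/leP.
by apply: le_INR; apply/leP.
Qed.

Lemma xs : forall i j : nat, (i <= j)%nat -> (j < m)%nat -> x i <= x j.
Proof. move=> i j ij jm; apply: le_INR; apply/leP; exact: as_. Qed.

Lemma C1R (i : 'I_m) : INR 'C(n.-1, (a i).-1) = rr Nr x i * INR 'C(n, a i).
Proof.
have [h1 _] := ab (ltn_ord i).
have e := mul_bin_diag n (a i).-1; rewrite prednK // in e.
have := f_equal INR e; rewrite !mult_INR -/Nr -/(x i) /rr => e'.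
have := Nr2 => hN; apply: (Rmult_eq_reg_l Nr); last lra.
rewrite e' /Rdiv; field; lra.
Qed.

Lemma C2R (i : 'I_m) : INR (c2v n (a i)) = ss Nr x i * INR 'C(n.-1, (a i).-1).
Proof.
have [h1 _] := ab (ltn_ord i).
have hN := Nr2.
have n1 : (1 <= n)%nat by have := n2; case: n.
have eN : INR n.-1 = Nr - 1 by rewrite -subn1 minus_INR //; apply/leP.
have ea : INR (a i).-1 = x i - 1 by rewrite -subn1 minus_INR //; apply/leP.
rewrite /c2v /ss; case: ifP => a1.
  have e := mul_bin_diag n.-1 (a i).-2.
  have e2 : (a i).-2.+1 = (a i).-1 by case: (a i) a1 => [|[|?]].
  rewrite e2 in e.
  have := f_equal INR e; rewrite !mult_INR eN ea => e'.
  apply: (Rmult_eq_reg_l (Nr - 1)); last lra.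
  rewrite e' /Rdiv; field; lra.
have -> : a i = 1%nat by apply/eqP; rewrite eqn_leq h1 andbT leqNgt a1.
rewrite /x; have -> : a i = 1%nat by apply/eqP; rewrite eqn_leq h1 andbT leqNgt a1.
rewrite /= /Rdiv; ring.
Qed.

Lemma C0pos (i : 'I_m) : 0 < INR 'C(n, a i).
Proof.
have [_ h] := ab (ltn_ord i).
apply: lt_0_INR; apply/ltP; rewrite bin_gt0; apply: (leq_trans h); exact: leq_subr.
Qed.

Lemma V0pos : 0 < \big[Rmult/1]_(i < m) INR 'C(n, a i).
Proof. apply: prod_pos => i; exact: C0pos. Qed.

Lemma PPE : \big[Rmult/1]_(i < m) rr Nr x i = PP Nr x m.
Proof. by rewrite /PP big_mkord. Qed.
Lemma SSE : \big[Rmult/1]_(i < m) ss Nr x i = SS Nr x m.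
Proof. by rewrite /SS big_mkord. Qed.

Lemma ha : forall i : 'I_m, (0 < a i)%nat.
Proof. by move=> i; have [] := ab (ltn_ord i). Qed.

Lemma e1 : \big[Rmult/1]_(i < m) INR 'C(n.-1, (a i).-1)
   = PP Nr x m * \big[Rmult/1]_(i < m) INR 'C(n, a i).
Proof. rewrite (eq_bigr _ (fun (i : 'I_m) _ => C1R i)) big_split /= PPE //. Qed.

Lemma e2 : \big[Rmult/1]_(i < m) INR (c2v n (a i))
   = SS Nr x m * (PP Nr x m * \big[Rmult/1]_(i < m) INR 'C(n, a i)).
Proof. rewrite (eq_bigr _ (fun (i : 'I_m) _ => C2R i)) big_split /= SSE e1 //. Qed.

Lemma meanE : mean_X n m a = Nr * PP Nr x m.
Proof.
rewrite /mean_X (sumXE _ ha) nconfE mult_INR !INR_prod -/Nr.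
under eq_bigr do rewrite C1R.
rewrite big_split /= PPE.
have := V0pos; move=> h. field. exact: (Rgt_not_eq _ _ h).
Qed.

Lemma varE : var_X n m a = Nr * PP Nr x m * DD Nr x m.
Proof.
rewrite /var_X meanE /DD.
rewrite (sumX2E _ ha) nconfE mult_INR plus_INR mult_INR !INR_prod -/Nr.
have n1 : (1 <= n)%nat by have := n2; case: n.
have -> : INR n.-1 = Nr - 1 by rewrite -subn1 minus_INR //; apply/leP.
rewrite e1 e2.
have -> : (Nr * PP Nr x m) ^ 2 = (Nr * PP Nr x m) * (Nr * PP Nr x m) by simpl; ring.
have := V0pos; move=> h. set V := \big[Rmult/1]_(i < m) _ in h *. set P := PP Nr x m. set S := SS Nr x m. field. exact: (Rgt_not_eq _ _ h).
Qed.

Lemma yE : (INR n - INR (a O)) * (INR n - INR (a 1)) / INR n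
      * \big[Rmult/1]_(i < m) (INR (a i) / INR n)
   = Nr * tt Nr x 0 * tt Nr x 1 * PP Nr x m.
Proof.
have := Nr2 => hN.
rewrite -PPE /tt /rr -/Nr /x; field; lra.
Qed.

Lemma main_k :
  (1 <= var_X n m a / ((INR n - INR (a O)) * (INR n - INR (a 1)) / INR n
      * \big[Rmult/1]_(i < m) (INR (a i) / INR n))
   /\ var_X n m a / ((INR n - INR (a O)) * (INR n - INR (a 1)) / INR n
      * \big[Rmult/1]_(i < m) (INR (a i) / INR n)) <= 2 * INR m * INR m)
  /\ ((INR n - INR (a O)) * (INR n - INR (a 1)) / INR n
        * \big[Rmult/1]_(i < m) (INR (a i) / INR n))
     = ((1 - INR (a O) / INR n) * (1 - INR (a 1) / INR n) * mean_X n m a).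
Proof.
have hN := Nr2.
have [_ [Du Dl]] := D_b hN xb xs m2 (leqnn m).
have {}Dl := Dl m2.
have [t0 _] := tt_b hN xb xs (ltnW m2).
have [t1 _] := tt_b hN xb xs m2.
have Pp : 0 < PP Nr x m.
  rewrite -PPE; apply: prod_pos => i; have := rr_b hN xb (ltn_ord i); lra.
rewrite yE varE meanE.
have -> : Nr * PP Nr x m * DD Nr x m / (Nr * tt Nr x 0 * tt Nr x 1 * PP Nr x m)
   = DD Nr x m / (tt Nr x 0 * tt Nr x 1) by field; lra.
have tp : 0 < tt Nr x 0 * tt Nr x 1 by nra.
have iT : 0 < / (tt Nr x 0 * tt Nr x 1) by apply: Rinv_0_lt_compat.
have eT : (tt Nr x 0 * tt Nr x 1) * / (tt Nr x 0 * tt Nr x 1) = 1 by field; lra.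
split; [split|].
- rewrite /Rdiv; nra.
- rewrite /Rdiv; nra.
- rewrite /tt /rr -/Nr /x; field; lra.
Qed.
End Final.

Theorem theorem2 (m : nat) (N : nat -> nat) (a : nat -> nat -> nat)
  (alpha : nat -> R) :
  (2 <= m)%N ->
  (* (A1) *)
  tends_to_infty N ->
  (* (A2) *)
  (forall i : nat, (i < m)%N ->
     tends_to_infty (fun k => a k i) /\ tends_to_infty (fun k => N k - a k i)) ->
  (* (A3) *)
  (forall k i : nat, (i < m)%N -> (1 <= a k i)%N /\ (a k i <= N k - 1)%N) ->
  (forall k i j : nat, (i <= j)%N -> (j < m)%N -> (a k i <= a k j)%N) ->
  (* (A4) *)
  (forall i : nat, (i < m)%N ->
     (0 <= alpha i <= 1)%R /\
     Un_cv (fun k => (INR (a k i) / INR (N k))%R) (alpha i)) ->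
  asymp (fun k => var_X (N k) m (a k))
        (fun k => ((INR (N k) - INR (a k O)) * (INR (N k) - INR (a k (S O))) / INR (N k)
                   * \big[Rmult/1%R]_(i < m) (INR (a k i) / INR (N k)))%R)
  /\
  (forall k : nat,
     ((INR (N k) - INR (a k O)) * (INR (N k) - INR (a k (S O))) / INR (N k)
        * \big[Rmult/1%R]_(i < m) (INR (a k i) / INR (N k)))%R
     = ((1 - INR (a k O) / INR (N k)) * (1 - INR (a k (S O)) / INR (N k))
        * mean_X (N k) m (a k))%R).
Proof.
move=> m2 _ _ A3 A3s _.
split; last first.
  move=> k; exact: (main_k m2 (A3 k) (A3s k)).2.
have hm : (2 <= INR m)%R by apply: (le_INR 2); apply/leP.
exists 1%R, (2 * INR m * INR m)%R; split; first lra.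
split; first nra.
exists 0%N => k _.
exact: (main_k m2 (A3 k) (A3s k)).1.
Qed.
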